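(* Let $\phi$ be a sentence of $\mathbf{FO}(=\!(\cdot),\mathrm{All}_1,\sqcup,[\cdot])$. Then $\phi$ is logically equivalent to some first-order sentence $\phi'$, i.e. $\mathfrak M\models_{\{\emptyset\}}\phi$ iff $\mathfrak M\models\phi'$ for every structure $\mathfrak M$.
   Context: Team semantics (lax version). For a structure $\mathfrak M$ with domain $M$, a team $X$ is a (possibly empty) set of assignments $s:V\to M$, $V$ a finite set of variables; $X(v)=\{s(v):s\in X\}$. Satisfaction for formulas in negation normal form: first-order literal $\alpha$: every $s\in X$ satisfies $\alpha$ (Tarski); $\psi\vee\theta$: $X=Y\cup Z$ with $\mathfrak M\models_Y\psi$, $\mathfrak M\models_Z\theta$; $\psi\wedge\theta$: both; $\exists v\psi$: some $F:X\to\mathcal P(M)\setminus\{\emptyset\}$ with $\mathfrak M\models_{X[F/v]}\psi$, $X[F/v]=\{s[m/v]:s\in X,m\in F(s)\}$; $\forall v\psi$: $\mathfrak M\models_{X[M/v]}\psi$, $X[M/v]=\{s[m/v]:s\in X,m\in M\}$. A sentence is true in $\mathfrak M$ iff $\mathfrak M\models_{\{\emptyset\}}\phi$. Operators: constancy atoms (all arities) $\mathfrak M\models_X=\!(\vec v)$ iff $s(\vec v)=s'(\vec v)$ for all $s,s'\in X$; unary totality atom $\mathfrak M\models_X\mathrm{All}_1(v)$ iff $X(v)=M$; classical disjunction $\mathfrak M\models_X\phi\sqcup\psi$ iff $\mathfrak M\models_X\phi$ or $\mathfrak M\models_X\psi$; for a first-order sentence $\theta$, $\mathfrak M\models_X[\theta]$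 iff $\mathfrak M\models\theta$ in Tarski semantics. *)

(* Defs.v *)
From Stdlib Require Import List Arith PeanoNat.
Import ListNotations.
Set Implicit Arguments.

(* A first-order signature: function symbols F, relation symbols Rl (arities are
   left implicit: interpretations act on argument lists). Variables are nat. *)
Inductive term (F : Type) : Type :=
| Var : nat -> term F
| App : F -> list (term F) -> term F.
Arguments Var {F} _. Arguments App {F} _ _.

Record structure (F Rl : Type) := {
  dom : Type;
  dom_inh : dom;
  fun_i : F -> list dom -> dom;
  rel_i : Rl -> list dom -> Prop }.

Definition assignment (M : Type) := nat -> option M.
Definition empty_asg {M : Type} : assignment M := fun _ => None.
Definition upd {M : Type} (s : assignment M) (v : nat) (m : M) : assignment M :=
  fun w => if Nat.eqb w v then Some m else s w.

Section Eval.
Context {F Rl : Type} (A : structure F Rl).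

Fixpoint eval (s : assignment (dom A)) (t : term F) : option (dom A) :=
  match t with
  | Var n => s n
  | App f ts =>
      let fix go (l : list (term F)) : option (list (dom A)) :=
        match l with
        | nil => Some nil
        | t' :: l' => match eval s t', go l' with
                      | Some a, Some b => Some (a :: b)
                      | _, _ => None end
        end in
      option_map (fun_i A f) (go ts)
  end.

Fixpoint evals (s : assignment (dom A)) (l : list (term F)) : option (list (dom A)) :=
  match l with
  | nil => Some nil
  | t :: l' => match eval s t, evals s l' with
               | Some a, Some b => Some (a :: b)
               | _, _ => None end
  end.
End Eval.

Fixpoint term_fv {F : Type} (t : term F) : list nat :=
  match t with
  | Var n => [n]
  | App _ ts => let fix go (l : list (term F)) : list nat :=
                  match l with nil => nil | t' :: l' => term_fv t' ++ go l' end
                in go ts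
  end.
Definition terms_fv {F : Type} (l : list (term F)) : list nat := flat_map term_fv l.

Inductive literal (F Rl : Type) : Type :=
| LRel : Rl -> list (term F) -> literal F Rl
| LNRel : Rl -> list (term F) -> literal F Rl
| LEq : term F -> term F -> literal F Rl
| LNEq : term F -> term F -> literal F Rl.
Arguments LRel {F Rl}. Arguments LNRel {F Rl}. Arguments LEq {F Rl}. Arguments LNEq {F Rl}.

Definition lit_fv {F Rl : Type} (a : literal F Rl) : list nat :=
  match a with
  | LRel _ ts | LNRel _ ts => terms_fv ts
  | LEq t1 t2 | LNEq t1 t2 => term_fv t1 ++ term_fv t2
  end.

(* Tarski satisfaction of a literal (literals with undefined variables fail;
   irrelevant for sentences). *)
Definition lit_sat {F Rl : Type} (A : structure F Rl) (s : assignment (dom A))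
  (a : literal F Rl) : Prop :=
  match a with
  | LRel R ts => exists ms, evals A s ts = Some ms /\ rel_i A R ms
  | LNRel R ts => exists ms, evals A s ts = Some ms /\ ~ rel_i A R ms
  | LEq t1 t2 => exists m, eval A s t1 = Some m /\ eval A s t2 = Some m
  | LNEq t1 t2 => exists m1 m2, eval A s t1 = Some m1 /\ eval A s t2 = Some m2 /\ m1 <> m2
  end.

Inductive fo (F Rl : Type) : Type :=
| FLit : literal F Rl -> fo F Rl
| FAnd : fo F Rl -> fo F Rl -> fo F Rl
| FOr : fo F Rl -> fo F Rl -> fo F Rl
| FEx : nat -> fo F Rl -> fo F Rl
| FAll : nat -> fo F Rl -> fo F Rl.
Arguments FLit {F Rl}. Arguments FAnd {F Rl}. Arguments FOr {F Rl}. Arguments FEx {F Rl}. Arguments FAll {F Rl}.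

Fixpoint fo_fv {F Rl : Type} (p : fo F Rl) : list nat :=
  match p with
  | FLit a => lit_fv a
  | FAnd p q | FOr p q => fo_fv p ++ fo_fv q
  | FEx v p | FAll v p => remove Nat.eq_dec v (fo_fv p)
  end.

Definition fo_sentence {F Rl : Type} (p : fo F Rl) : Prop := fo_fv p = nil.

Fixpoint tarski {F Rl : Type} (A : structure F Rl) (s : assignment (dom A))
  (p : fo F Rl) : Prop :=
  match p with
  | FLit a => lit_sat A s a
  | FAnd p q => tarski A s p /\ tarski A s q
  | FOr p q => tarski A s p \/ tarski A s q
  | FEx v p => exists m, tarski A (upd s v m) p
  | FAll v p => forall m, tarski A (upd s v m) p
  end.

Definition fo_true {F Rl : Type} (A : structure F Rl) (p : fo F Rl) : Prop :=
  tarski A empty_asg p.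

Inductive tformula (F Rl : Type) : Type :=
| TLit : literal F Rl -> tformula F Rl
| TAnd : tformula F Rl -> tformula F Rl -> tformula F Rl
| TOr : tformula F Rl -> tformula F Rl -> tformula F Rl
| TEx : nat -> tformula F Rl -> tformula F Rl
| TAll : nat -> tformula F Rl -> tformula F Rl
| TConst : list nat -> tformula F Rl
| TAll1 : nat -> tformula F Rl
| TCOr : tformula F Rl -> tformula F Rl -> tformula F Rl
| TBrack : fo F Rl -> tformula F Rl.
Arguments TLit {F Rl}. Arguments TAnd {F Rl}. Arguments TOr {F Rl}. Arguments TEx {F Rl}. Arguments TAll {F Rl}.
Arguments TConst {F Rl}. Arguments TAll1 {F Rl}. Arguments TCOr {F Rl}. Arguments TBrack {F Rl}.

Fixpoint t_fv {F Rl : Type} (p : tformula F Rl) : list nat :=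
  match p with
  | TLit a => lit_fv a
  | TAnd p q | TOr p q | TCOr p q => t_fv p ++ t_fv q
  | TEx v p | TAll v p => remove Nat.eq_dec v (t_fv p)
  | TConst vs => vs
  | TAll1 v => [v]
  | TBrack _ => nil
  end.

Fixpoint brackets_ok {F Rl : Type} (p : tformula F Rl) : Prop :=
  match p with
  | TLit _ | TConst _ | TAll1 _ => True
  | TAnd p q | TOr p q | TCOr p q => brackets_ok p /\ brackets_ok q
  | TEx _ p | TAll _ p => brackets_ok p
  | TBrack th => fo_sentence th
  end.

Definition t_sentence {F Rl : Type} (p : tformula F Rl) : Prop :=
  t_fv p = nil /\ brackets_ok p.

Definition team (M : Type) := assignment M -> Prop.

(* Lax team semantics *)
Fixpoint tsat {F Rl : Type} (A : structure F Rl) (X : team (dom A))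
  (p : tformula F Rl) : Prop :=
  match p with
  | TLit a => forall s, X s -> lit_sat A s a
  | TAnd p q => tsat A X p /\ tsat A X q
  | TOr p q => exists Y Z : team (dom A),
      (forall s, X s <-> (Y s \/ Z s)) /\ tsat A Y p /\ tsat A Z q
  | TEx v p => exists G : assignment (dom A) -> dom A -> Prop,
      (forall s, X s -> exists m, G s m) /\
      tsat A (fun s' => exists s m, X s /\ G s m /\ s' = upd s v m) p
  | TAll v p => tsat A (fun s' => exists s m, X s /\ s' = upd s v m) p
  | TConst vs => forall s s', X s -> X s' -> map s vs = map s' vs
  | TAll1 v => forall m : dom A, exists s, X s /\ s v = Some m
  | TCOr p q => tsat A X p \/ tsat A X q
  | TBrack th => fo_true A th
  end.

Definition t_true {F Rl : Type} (A : structure F Rl) (p : tformula F Rl) : Prop :=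
  tsat A (fun s => s = empty_asg) p.

(* Main.v *)
Require Import Defs.
From Stdlib Require Import List Arith PeanoNat Lia Classical FunctionalExtensionality.
Import ListNotations.

Fixpoint term_ind' {F : Type} (P : term F -> Prop) (HV : forall n, P (Var n))
  (HA : forall f l, Forall P l -> P (App f l)) (t : term F) : P t :=
  match t with
  | Var n => HV n
  | App f l => HA f l ((fix go (l : list (term F)) : Forall P l :=
      match l with nil => Forall_nil _ | t' :: l' => Forall_cons _ (term_ind' P HV HA t') (go l') end) l)
  end.

Lemma eval_App {F Rl} (A : structure F Rl) s f ts :
  eval A s (App f ts) = option_map (fun_i A f) (evals A s ts).
Proof. simpl. f_equal. induction ts as [|t ts IH]; simpl; [reflexivity|]. rewrite IH. reflexivity. Qed.

Lemma term_fv_App {F} (f : F) ts : term_fv (App f ts) = terms_fv ts.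
Proof. simpl. induction ts as [|t ts IH]; simpl; [reflexivity|]. rewrite IH. reflexivity. Qed.

Lemma eval_coinc {F Rl} (A : structure F Rl) s s' t :
  (forall v, In v (term_fv t) -> s v = s' v) -> eval A s t = eval A s' t.
Proof.
  revert t. apply (term_ind' (fun t => (forall v, In v (term_fv t) -> s v = s' v) -> eval A s t = eval A s' t)).
  - intros n H. simpl. apply H. simpl; auto.
  - intros f l HF H. rewrite !eval_App. f_equal. rewrite term_fv_App in H.
    induction HF as [|t l Ht HF IH]; simpl; [reflexivity|].
    simpl in H. rewrite Ht, IH; auto; intros v Hv; apply H; apply in_or_app; auto.
Qed.

Lemma evals_coinc {F Rl} (A : structure F Rl) s s' ts :
  (forall v, In v (terms_fv ts) -> s v = s' v) -> evals A s ts = evals A s' ts.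
Proof.
  induction ts as [|t ts IH]; intros H; simpl; [reflexivity|].
  simpl in H. rewrite (eval_coinc A s s' t), IH; auto; intros v Hv; apply H; apply in_or_app; auto.
Qed.

Lemma tarski_coinc {F Rl} (A : structure F Rl) p : forall s s',
  (forall v, In v (fo_fv p) -> s v = s' v) -> (tarski A s p <-> tarski A s' p).
Proof.
  induction p as [a|p IHp q IHq|p IHp q IHq|x p IHp|x p IHp]; intros s s' H; simpl in *.
  - destruct a; simpl in *.
    + rewrite (evals_coinc A s s'); [reflexivity|auto].
    + rewrite (evals_coinc A s s'); [reflexivity|auto].
    + rewrite (eval_coinc A s s' t), (eval_coinc A s s' t0); [reflexivity| |];
        intros; apply H; apply in_or_app; auto.
    + rewrite (eval_coinc A s s' t), (eval_coinc A s s' t0); [reflexivity| |];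
        intros; apply H; apply in_or_app; auto.
  - rewrite (IHp s s'), (IHq s s'); [reflexivity| |]; intros; apply H; apply in_or_app; auto.
  - rewrite (IHp s s'), (IHq s s'); [reflexivity| |]; intros; apply H; apply in_or_app; auto.
  - split; intros [m Hm]; exists m; revert Hm; apply IHp; intros v Hv; unfold upd;
      destruct (Nat.eqb_spec v x); auto; first [apply H | symmetry; apply H]; apply in_in_remove; auto.
  - split; intros Hm m; specialize (Hm m); revert Hm; apply IHp; intros v Hv; unfold upd;
      destruct (Nat.eqb_spec v x); auto; first [apply H | symmetry; apply H]; apply in_in_remove; auto.
Qed.

Definition merge {M : Type} (N : nat) (s e : assignment M) : assignment M :=
  fun v => if v <? N then s v else e v.

Lemma merge_upd_lt {M} N (s e : assignment M) v m : v < N ->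
  upd (merge N s e) v m = merge N (upd s v m) e.
Proof.
  intros H; apply functional_extensionality; intros u; unfold upd, merge.
  destruct (Nat.eqb_spec u v); destruct (Nat.ltb_spec u N); subst; auto; lia.
Qed.

Lemma merge_upd_ge {M} N (s e : assignment M) d m : N <= d ->
  upd (merge N s e) d m = merge N s (upd e d m).
Proof.
  intros H; apply functional_extensionality; intros u; unfold upd, merge.
  destruct (Nat.eqb_spec u d); destruct (Nat.ltb_spec u N); subst; auto; lia.
Qed.

Definition TrueF {F Rl} : fo F Rl := FAll 0 (FLit (LEq (Var 0) (Var 0))).
Definition FalseF {F Rl} : fo F Rl := FAll 0 (FLit (LNEq (Var 0) (Var 0))).

Lemma TrueF_sat {F Rl} (A : structure F Rl) s : tarski A s TrueF.
Proof. simpl. intros m. exists m. unfold upd; simpl. auto. Qed.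
Lemma FalseF_sat {F Rl} (A : structure F Rl) s : ~ tarski A s FalseF.
Proof. simpl. intros H. destruct (H (dom_inh A)) as [m1 [m2 [H1 [H2 H3]]]].
  unfold upd in *; simpl in *. congruence. Qed.
Lemma TrueF_fv {F Rl} : @fo_fv F Rl TrueF = nil. Proof. reflexivity. Qed.
Lemma FalseF_fv {F Rl} : @fo_fv F Rl FalseF = nil. Proof. reflexivity. Qed.

Record disj (F Rl : Type) := mkD { dg : fo F Rl; da : fo F Rl; db : list (nat * fo F Rl) }.
Arguments mkD {F Rl}. Arguments dg {F Rl}. Arguments da {F Rl}. Arguments db {F Rl}.

Definition Dsem {F Rl} N (A : structure F Rl) (X : team (dom A)) (D : disj F Rl) (e : assignment (dom A)) : Prop :=
  tarski A (merge N empty_asg e) (dg D) /\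
  (forall s, X s -> tarski A (merge N s e) (da D)) /\
  (forall d b, In (d, b) (db D) -> forall m, exists s, X s /\ tarski A (merge N s (upd e d m)) b).

Definition total {M} (e : assignment M) := forall v, e v <> None.

Definition OK {F Rl} N (P Q : nat -> Prop) (p : fo F Rl) :=
  forall v, In v (fo_fv p) -> (v < N /\ P v) \/ Q v.

Definition WF {F Rl} N (P Q : nat -> Prop) (D : disj F Rl) :=
  OK N (fun _ => False) Q (dg D) /\ OK N P Q (da D) /\
  (forall d b, In (d, b) (db D) -> Q d /\ ~ In d (fo_fv (da D)) /\ ~ In d (fo_fv (dg D)) /\ OK N P Q b).

Lemma merge_agree {M} N (Q : nat -> Prop) (s e e' : assignment M) (l : list nat) :
  (forall v, In v l -> v < N \/ Q v) -> (forall v, Q v -> e v = e' v) ->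
  forall v, In v l -> merge N s e v = merge N s e' v.
Proof.
  intros H1 H2 v Hv. unfold merge. destruct (Nat.ltb_spec v N); auto.
  destruct (H1 v Hv); [lia|auto].
Qed.

Lemma OK_weak {F Rl} N P Q (p : fo F Rl) : OK N P Q p -> forall v, In v (fo_fv p) -> v < N \/ Q v.
Proof. intros H v Hv. destruct (H v Hv) as [[]|]; auto. Qed.

Lemma upd_agree {M} (Q : nat -> Prop) (e e' : assignment M) d m :
  (forall v, Q v -> e v = e' v) -> forall v, Q v -> upd e d m v = upd e' d m v.
Proof. intros H v Hv. unfold upd. destruct (v =? d); auto. Qed.

Lemma Dsem_agree {F Rl} N P Q (A : structure F Rl) X D e e' :
  WF N P Q D -> (forall v, Q v -> e v = e' v) -> Dsem N A X D e -> Dsem N A X D e'.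
Proof.
  intros [Hg [Ha Hb]] HQ [H1 [H2 H3]]. split; [|split].
  - refine (proj1 (tarski_coinc A _ _ _ _) H1). apply (merge_agree N Q _ _ _ _ (OK_weak _ _ _ _ Hg) HQ).
  - intros s Hs. refine (proj1 (tarski_coinc A _ _ _ _) (H2 s Hs)). apply (merge_agree N Q _ _ _ _ (OK_weak _ _ _ _ Ha) HQ).
  - intros d b Hdb m. destruct (H3 d b Hdb m) as [s [Hs Hsb]]. exists s; split; auto.
    refine (proj1 (tarski_coinc A _ _ _ _) Hsb). apply (merge_agree N Q).
    + apply (OK_weak N P Q b). apply (Hb d b Hdb).
    + apply upd_agree; auto.
Qed.

Definition andD {F Rl} (D1 D2 : disj F Rl) : disj F Rl :=
  mkD (FAnd (dg D1) (dg D2)) (FAnd (da D1) (da D2)) (db D1 ++ db D2).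
Definition orD {F Rl} (D1 D2 : disj F Rl) : disj F Rl :=
  mkD (FAnd (dg D1) (dg D2)) (FOr (da D1) (da D2))
    (map (fun p => (fst p, FAnd (da D1) (snd p))) (db D1) ++
     map (fun p => (fst p, FAnd (da D2) (snd p))) (db D2)).
Definition exD {F Rl} v (D : disj F Rl) : disj F Rl :=
  mkD (dg D) (FEx v (da D)) (map (fun p => (fst p, FEx v (FAnd (da D) (snd p)))) (db D)).
Definition allD {F Rl} v (D : disj F Rl) : disj F Rl :=
  mkD (dg D) (FAll v (da D)) (map (fun p => (fst p, FEx v (snd p))) (db D)).

Definition glue {M} c (e1 e2 : assignment M) : assignment M :=
  fun v => if v <? c then e1 v else e2 v.

Lemma glue_total {M} c (e1 e2 : assignment M) : total e1 -> total e2 -> total (glue c e1 e2).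
Proof. unfold total, glue; intros H1 H2 v; destruct (v <? c); auto. Qed.

Lemma Dsem_and {F Rl} N (A : structure F Rl) X D1 D2 e :
  Dsem N A X (andD D1 D2) e <-> Dsem N A X D1 e /\ Dsem N A X D2 e.
Proof.
  unfold Dsem, andD; simpl. split.
  - intros [[G1 G2] [Ha Hb]]. repeat split; auto; try (intros s Hs; apply (Ha s Hs));
      intros d b Hdb; apply Hb; apply in_or_app; auto.
  - intros [[G1 [A1 B1]] [G2 [A2 B2]]]. repeat split; auto; try (intros s Hs; split; auto).
    intros d b Hdb; apply in_app_or in Hdb; destruct Hdb; auto.
Qed.

Lemma and_step {F Rl} N P Q1 Q2 c (A : structure F Rl) X D1 D2 :
  WF N P Q1 D1 -> WF N P Q2 D2 -> (forall v, Q1 v -> v < c) -> (forall v, Q2 v -> c <= v) ->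
  ((exists e1, total e1 /\ Dsem N A X D1 e1) /\ (exists e2, total e2 /\ Dsem N A X D2 e2)) <->
  exists e, total e /\ Dsem N A X (andD D1 D2) e.
Proof.
  intros W1 W2 H1 H2. split.
  - intros [[e1 [T1 S1]] [e2 [T2 S2]]]. exists (glue c e1 e2). split; [apply glue_total; auto|].
    apply Dsem_and. split.
    + apply (Dsem_agree N P Q1 A X D1 e1); auto. intros v Hv; unfold glue.
      destruct (Nat.ltb_spec v c); auto. specialize (H1 v Hv); lia.
    + apply (Dsem_agree N P Q2 A X D2 e2); auto. intros v Hv; unfold glue.
      destruct (Nat.ltb_spec v c); auto. specialize (H2 v Hv); lia.
  - intros [e [T S]]. apply Dsem_and in S. destruct S. split; exists e; auto.
Qed.

Lemma tarski_upd_notin {F Rl} N (A : structure F Rl) s e d m p :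
  ~ In d (fo_fv p) -> (tarski A (merge N s e) p <-> tarski A (merge N s (upd e d m)) p).
Proof.
  intros H. apply tarski_coinc. intros v Hv. unfold merge, upd.
  destruct (v <? N); auto. destruct (Nat.eqb_spec v d); subst; tauto.
Qed.

Lemma in_map_pair {A B C : Type} (f : A * B -> C) (d : A) (b : B) (g : A * B -> B) l :
  In (d, b) (map (fun p => (fst p, g p)) l) -> exists b0, In (d, b0) l /\ b = g (d, b0).
Proof.
  intros H. apply in_map_iff in H. destruct H as [[d0 b0] [E H]]. simpl in E. inversion E; subst.
  exists b0; auto.
Qed.

Lemma Dsem_or {F Rl} N P Q1 Q2 (A : structure F Rl) X D1 D2 e :
  WF N P Q1 D1 -> WF N P Q2 D2 ->
  (Dsem N A X (orD D1 D2) e <->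
   exists Y Z : team (dom A), (forall s, X s <-> Y s \/ Z s) /\ Dsem N A Y D1 e /\ Dsem N A Z D2 e).
Proof.
  intros [_ [_ W1]] [_ [_ W2]]. unfold Dsem, orD; simpl. split.
  - intros [[G1 G2] [Ha Hb]].
    exists (fun s => X s /\ tarski A (merge N s e) (da D1)), (fun s => X s /\ tarski A (merge N s e) (da D2)).
    split; [|split; split; auto; split; try (intros s [Hs1 Hs2]; auto)].
    + intros s; split; [intros Hs; destruct (Ha s Hs); tauto | tauto].
    + intros d b Hdb m. destruct (Hb d (FAnd (da D1) b)) with m as [s [Hs [Hs1 Hs2]]].
      * apply in_or_app; left. apply in_map_iff. exists (d, b); auto.
      * exists s; repeat split; auto. apply (tarski_upd_notin N A s e d m); auto. apply (W1 d b Hdb).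
    + intros d b Hdb m. destruct (Hb d (FAnd (da D2) b)) with m as [s [Hs [Hs1 Hs2]]].
      * apply in_or_app; right. apply in_map_iff. exists (d, b); auto.
      * exists s; repeat split; auto. apply (tarski_upd_notin N A s e d m); auto. apply (W2 d b Hdb).
  - intros [Y [Z [HX [[G1 [A1 B1]] [G2 [A2 B2]]]]]]. split; [split; auto|split].
    + intros s Hs. apply HX in Hs. destruct Hs; [left|right]; auto.
    + intros d b Hdb m. apply in_app_or in Hdb. destruct Hdb as [Hdb|Hdb];
        apply in_map_iff in Hdb; destruct Hdb as [[d0 b0] [E Hdb]]; simpl in E; inversion E; subst.
      * destruct (B1 d b0 Hdb m) as [s [Hs Hsb]]. exists s; split; [apply HX; auto|split; auto].
        apply (tarski_upd_notin N A s e d m); [apply (W1 d b0 Hdb)|auto].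
      * destruct (B2 d b0 Hdb m) as [s [Hs Hsb]]. exists s; split; [apply HX; auto|split; auto].
        apply (tarski_upd_notin N A s e d m); [apply (W2 d b0 Hdb)|auto].
Qed.

Lemma or_step {F Rl} N P Q1 Q2 c (A : structure F Rl) X D1 D2 :
  WF N P Q1 D1 -> WF N P Q2 D2 -> (forall v, Q1 v -> v < c) -> (forall v, Q2 v -> c <= v) ->
  (exists Y Z : team (dom A), (forall s, X s <-> Y s \/ Z s) /\
     (exists e1, total e1 /\ Dsem N A Y D1 e1) /\ (exists e2, total e2 /\ Dsem N A Z D2 e2)) <->
  exists e, total e /\ Dsem N A X (orD D1 D2) e.
Proof.
  intros W1 W2 H1 H2. split.
  - intros [Y [Z [HX [[e1 [T1 S1]] [e2 [T2 S2]]]]]]. exists (glue c e1 e2).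
    split; [apply glue_total; auto|]. apply (Dsem_or N P Q1 Q2); auto. exists Y, Z; split; auto. split.
    + apply (Dsem_agree N P Q1 A Y D1 e1); auto. intros v Hv; unfold glue.
      destruct (Nat.ltb_spec v c); auto. specialize (H1 v Hv); lia.
    + apply (Dsem_agree N P Q2 A Z D2 e2); auto. intros v Hv; unfold glue.
      destruct (Nat.ltb_spec v c); auto. specialize (H2 v Hv); lia.
  - intros [e [T S]]. apply (Dsem_or N P Q1 Q2) in S; auto.
    destruct S as [Y [Z [HX [S1 S2]]]]. exists Y, Z; split; auto. split; exists e; auto.
Qed.

Definition XG {M} (X : team M) v (G : assignment M -> M -> Prop) : team M :=
  fun s' => exists s m, X s /\ G s m /\ s' = upd s v m.
Definition XM {M} (X : team M) v : team M :=
  fun s' => exists s m, X s /\ s' = upd s v m.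

Lemma ex_step {F Rl} N P Q (A : structure F Rl) X D e v :
  v < N -> WF N P Q D ->
  ((exists G, (forall s, X s -> exists m, G s m) /\ Dsem N A (XG X v G) D e) <->
   Dsem N A X (exD v D) e).
Proof.
  intros Hv [_ [_ W]]. unfold Dsem, exD; simpl. split.
  - intros [G [HG [G1 [Ha Hb]]]]. split; auto. split.
    + intros s Hs. destruct (HG s Hs) as [m Hm]. exists m. rewrite merge_upd_lt by auto.
      apply Ha. exists s, m; auto.
    + intros d b Hdb m'. apply in_map_iff in Hdb. destruct Hdb as [[d0 b0] [E Hdb]]; simpl in E;
        inversion E; subst. destruct (Hb d b0 Hdb m') as [s' [[s [m0 [Hs [Hm0 E']]]] Hs']]. subst s'.
      exists s; split; auto. exists m0. rewrite merge_upd_lt by auto. split; auto.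
      apply (tarski_upd_notin N A _ e d m'); [apply (W d b0 Hdb)|]. apply Ha. exists s, m0; auto.
  - intros [G1 [Ha Hb]]. exists (fun s m => tarski A (merge N (upd s v m) e) (da D)). split.
    + intros s Hs. destruct (Ha s Hs) as [m Hm]. exists m. rewrite <- merge_upd_lt; auto.
    + split; auto. split.
      * intros s' [s [m [Hs [Hm E]]]]. subst; auto.
      * intros d b0 Hdb m'. destruct (Hb d (FEx v (FAnd (da D) b0))) with m' as [s [Hs [m0 [Hm1 Hm2]]]].
        -- apply in_map_iff. exists (d, b0); auto.
        -- rewrite merge_upd_lt in Hm1, Hm2 by auto. exists (upd s v m0). split; auto.
           exists s, m0; split; auto. split; auto.
           apply (tarski_upd_notin N A _ e d m'); auto. apply (W d b0 Hdb).
Qed.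

Lemma all_step {F Rl} N (A : structure F Rl) X D e v :
  v < N -> (Dsem N A (XM X v) D e <-> Dsem N A X (allD v D) e).
Proof.
  intros Hv. unfold Dsem, allD; simpl. split.
  - intros [G1 [Ha Hb]]. split; auto. split.
    + intros s Hs m. rewrite merge_upd_lt by auto. apply Ha. exists s, m; auto.
    + intros d b Hdb m'. apply in_map_iff in Hdb. destruct Hdb as [[d0 b0] [E Hdb]]; simpl in E;
        inversion E; subst. destruct (Hb d b0 Hdb m') as [s' [[s [m0 [Hs E']]] Hs']]. subst s'.
      exists s; split; auto. exists m0. rewrite merge_upd_lt by auto. auto.
  - intros [G1 [Ha Hb]]. split; auto. split.
    + intros s' [s [m [Hs E]]]. subst. rewrite <- merge_upd_lt by auto. apply Ha; auto.
    + intros d b0 Hdb m'. destruct (Hb d (FEx v b0)) with m' as [s [Hs [m0 Hm]]].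
      * apply in_map_iff. exists (d, b0); auto.
      * rewrite merge_upd_lt in Hm by auto. exists (upd s v m0). split; auto. exists s, m0; auto.
Qed.

Lemma WF_mono {F Rl} N (P P' Q Q' : nat -> Prop) (D : disj F Rl) :
  (forall v, P v -> P' v) -> (forall v, Q v -> Q' v) -> WF N P Q D -> WF N P' Q' D.
Proof.
  intros HP HQ [G [Aa B]]. unfold OK in *. split; [|split].
  - intros v Hv. destruct (G v Hv) as [[]|]; auto; tauto.
  - intros v Hv. destruct (Aa v Hv) as [[]|]; auto.
  - intros d b Hdb. destruct (B d b Hdb) as [H1 [H2 [H3 H4]]]. repeat split; auto.
    intros v Hv. destruct (H4 v Hv) as [[]|]; auto.
Qed.

Lemma notin_other {F Rl} N P Q1 Q2 (p : fo F Rl) d :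
  OK N P Q2 p -> Q1 d -> N <= d -> (forall v, Q1 v -> ~ Q2 v) -> ~ In d (fo_fv p).
Proof. intros H H1 H2 H3 Hin. destruct (H d Hin) as [[]|]; [lia|]. eapply H3; eauto. Qed.

Lemma OK_app {F Rl} N P Q1 Q2 (p q : fo F Rl) l :
  OK N P Q1 p -> OK N P Q2 q -> (forall v, In v l -> In v (fo_fv p ++ fo_fv q)) ->
  forall v, In v l -> (v < N /\ P v) \/ (Q1 v \/ Q2 v).
Proof.
  intros H1 H2 H v Hv. apply H in Hv. apply in_app_or in Hv. destruct Hv as [Hv|Hv];
  [destruct (H1 v Hv)|destruct (H2 v Hv)]; tauto.
Qed.

Lemma WF_and {F Rl} N P Q1 Q2 (D1 D2 : disj F Rl) :
  WF N P Q1 D1 -> WF N P Q2 D2 -> (forall v, Q1 v -> ~ Q2 v) -> (forall v, Q2 v -> ~ Q1 v) ->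
  (forall v, Q1 v \/ Q2 v -> N <= v) ->
  WF N P (fun v => Q1 v \/ Q2 v) (andD D1 D2).
Proof.
  intros [G1 [A1 B1]] [G2 [A2 B2]] H12 H21 HN. unfold andD; simpl. split; [|split].
  - intros v Hv. eapply (OK_app N (fun _ => False) Q1 Q2 (dg D1) (dg D2)); eauto.
  - intros v Hv. eapply (OK_app N P Q1 Q2 (da D1) (da D2)); eauto.
  - intros d b Hdb. apply in_app_or in Hdb. destruct Hdb as [Hdb|Hdb].
    + destruct (B1 d b Hdb) as [K1 [K2 [K3 K4]]]. repeat split; auto.
      * intros Hin. apply in_app_or in Hin. destruct Hin; [tauto|].
        revert H. eapply (notin_other N _ Q1 Q2); eauto.
      * intros Hin. apply in_app_or in Hin. destruct Hin; [tauto|].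
        revert H. eapply (notin_other N _ Q1 Q2); eauto.
      * intros v Hv. destruct (K4 v Hv); tauto.
    + destruct (B2 d b Hdb) as [K1 [K2 [K3 K4]]]. repeat split; auto.
      * intros Hin. apply in_app_or in Hin. destruct Hin; [|tauto].
        revert H. eapply (notin_other N _ Q2 Q1); eauto.
      * intros Hin. apply in_app_or in Hin. destruct Hin; [|tauto].
        revert H. eapply (notin_other N _ Q2 Q1); eauto.
      * intros v Hv. destruct (K4 v Hv); tauto.
Qed.

Lemma WF_or {F Rl} N P Q1 Q2 (D1 D2 : disj F Rl) :
  WF N P Q1 D1 -> WF N P Q2 D2 -> (forall v, Q1 v -> ~ Q2 v) -> (forall v, Q2 v -> ~ Q1 v) ->
  (forall v, Q1 v \/ Q2 v -> N <= v) ->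
  WF N P (fun v => Q1 v \/ Q2 v) (orD D1 D2).
Proof.
  intros [G1 [A1 B1]] [G2 [A2 B2]] H12 H21 HN. unfold orD; simpl. split; [|split].
  - intros v Hv. eapply (OK_app N (fun _ => False) Q1 Q2 (dg D1) (dg D2)); eauto.
  - intros v Hv. eapply (OK_app N P Q1 Q2 (da D1) (da D2)); eauto.
  - intros d b Hdb. apply in_app_or in Hdb. destruct Hdb as [Hdb|Hdb];
      apply in_map_iff in Hdb; destruct Hdb as [[d0 b0] [E Hdb]]; simpl in E; inversion E; subst.
    + destruct (B1 d b0 Hdb) as [K1 [K2 [K3 K4]]]. repeat split; auto.
      * intros Hin. apply in_app_or in Hin. destruct Hin; [tauto|].
        revert H. eapply (notin_other N _ Q1 Q2); eauto.
      * intros Hin. apply in_app_or in Hin. destruct Hin; [tauto|].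
        revert H. eapply (notin_other N _ Q1 Q2); eauto.
      * intros v Hv. simpl in Hv. apply in_app_or in Hv. destruct Hv as [Hv|Hv];
          [destruct (A1 v Hv)|destruct (K4 v Hv)]; tauto.
    + destruct (B2 d b0 Hdb) as [K1 [K2 [K3 K4]]]. repeat split; auto.
      * intros Hin. apply in_app_or in Hin. destruct Hin; [|tauto].
        revert H. eapply (notin_other N _ Q2 Q1); eauto.
      * intros Hin. apply in_app_or in Hin. destruct Hin; [|tauto].
        revert H. eapply (notin_other N _ Q2 Q1); eauto.
      * intros v Hv. simpl in Hv. apply in_app_or in Hv. destruct Hv as [Hv|Hv];
          [destruct (A2 v Hv)|destruct (K4 v Hv)]; tauto.
Qed.

Lemma WF_ex {F Rl} N P Q v (D : disj F Rl) :
  WF N P Q D -> WF N (fun u => P u /\ u <> v) Q (exD v D).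
Proof.
  intros [G [Aa B]]. unfold exD; simpl. split; [|split]; auto.
  - intros u Hu. apply in_remove in Hu. destruct Hu as [Hu Hne]. destruct (Aa u Hu); tauto.
  - intros d b Hdb. apply in_map_iff in Hdb; destruct Hdb as [[d0 b0] [E Hdb]]; simpl in E; inversion E; subst.
    destruct (B d b0 Hdb) as [K1 [K2 [K3 K4]]]. repeat split; auto.
    + intros Hin. apply in_remove in Hin. tauto.
    + intros u Hu. apply in_remove in Hu. destruct Hu as [Hu Hne]. simpl in Hu.
      apply in_app_or in Hu. destruct Hu as [Hu|Hu]; [destruct (Aa u Hu)|destruct (K4 u Hu)]; tauto.
Qed.

Lemma WF_all {F Rl} N P Q v (D : disj F Rl) :
  WF N P Q D -> WF N (fun u => P u /\ u <> v) Q (allD v D).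
Proof.
  intros [G [Aa B]]. unfold allD; simpl. split; [|split]; auto.
  - intros u Hu. apply in_remove in Hu. destruct Hu as [Hu Hne]. destruct (Aa u Hu); tauto.
  - intros d b Hdb. apply in_map_iff in Hdb; destruct Hdb as [[d0 b0] [E Hdb]]; simpl in E; inversion E; subst.
    destruct (B d b0 Hdb) as [K1 [K2 [K3 K4]]]. repeat split; auto.
    + intros Hin. apply in_remove in Hin. tauto.
    + intros u Hu. apply in_remove in Hu. destruct Hu as [Hu Hne].
      destruct (K4 u Hu); tauto.
Qed.

Fixpoint constA {F Rl} b (vs : list nat) : fo F Rl :=
  match vs with
  | [] => TrueF
  | v :: vs' => FAnd (FLit (LEq (Var v) (Var b))) (constA (S b) vs')
  end.

Lemma constA_fv {F Rl} b vs u : In u (fo_fv (@constA F Rl b vs)) -> In u vs \/ (b <= u < b + length vs).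
Proof.
  revert b. induction vs as [|v vs IH]; intros b H; simpl in *; [contradiction|].
  destruct H as [H|[H|H]]; subst; auto; [right; lia|].
  destruct (IH _ H); [tauto|right; lia].
Qed.

Lemma constA_sem {F Rl} N (A : structure F Rl) s e b vs :
  (forall v, In v vs -> v < N) -> N <= b ->
  (tarski A (merge N s e) (constA b vs) <->
   forall i v, nth_error vs i = Some v -> exists m, s v = Some m /\ e (b + i) = Some m).
Proof.
  revert b. induction vs as [|v vs IH]; intros b Hvs Hb; cbn [constA].
  - split; [intros _ i v H; destruct i; discriminate | intros _; apply TrueF_sat].
  - cbn [tarski lit_sat eval]. rewrite IH by (simpl in Hvs; auto; lia). unfold merge.
    destruct (Nat.ltb_spec v N) as [Hv0|Hv0]; [|specialize (Hvs v (or_introl eq_refl)); lia].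
    destruct (Nat.ltb_spec b N) as [Hb0|Hb0]; [lia|]. split.
    + intros [[m [H1 H2]] H3] i u Hi. destruct i as [|i]; simpl in Hi.
      * inversion Hi; subst. exists m. rewrite Nat.add_0_r. auto.
      * destruct (H3 i u Hi) as [m' Hm']. exists m'. rewrite <- Nat.add_succ_comm. auto.
    + intros H. split.
      * destruct (H 0 v eq_refl) as [m Hm]. exists m. rewrite Nat.add_0_r in Hm. tauto.
      * intros i u Hi. destruct (H (S i) u Hi) as [m Hm]. exists m. rewrite <- Nat.add_succ_comm in Hm. auto.
Qed.

Definition Inv {F Rl} (A : structure F Rl) (X : team (dom A)) (p : tformula F Rl) :=
  forall s, X s -> forall v, In v (t_fv p) -> s v <> None.

Lemma const_sem {F Rl} N (A : structure F Rl) X b vs :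
  (forall v, In v vs -> v < N) -> N <= b -> Inv A X (TConst vs) ->
  (tsat A X (TConst vs) <-> exists e, total e /\ Dsem N A X (mkD TrueF (constA b vs) []) e).
Proof.
  intros Hvs Hb HI. cbn [tsat]. unfold Dsem; cbn [dg da db]. split.
  - intros H. destruct (classic (exists s0, X s0)) as [[s0 Hs0]|Hn].
    + exists (fun p => Some (match s0 (nth (p - b) vs 0) with Some x => x | None => dom_inh A end)).
      split; [intros v; discriminate|]. split; [apply TrueF_sat|split; [|intros; contradiction]].
      intros s Hs. apply constA_sem; auto. intros i v Hi.
      assert (Hv : In v vs) by (eapply nth_error_In; eauto).
      specialize (HI s0 Hs0 v Hv). destruct (s0 v) as [m|] eqn:E; [|contradiction].
      exists m. split.
      * specialize (H s s0 Hs Hs0). assert (K := f_equal (fun l => nth_error l i) H). simpl in K.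
        rewrite !nth_error_map, Hi in K. simpl in K. inversion K. congruence.
      * replace (b + i - b) with i by lia. rewrite (nth_error_nth vs i 0 Hi), E. reflexivity.
    + exists (fun _ => Some (dom_inh A)). split; [intros v; discriminate|].
      split; [apply TrueF_sat|split; [|intros; contradiction]].
      intros s Hs. exfalso; eauto.
  - intros [e [_ [_ [Ha _]]]] s s' Hs Hs'. apply map_ext_in. intros v Hv.
    apply In_nth_error in Hv. destruct Hv as [i Hi].
    destruct (proj1 (constA_sem N A s e b vs Hvs Hb) (Ha s Hs) i v Hi) as [m1 [E1 F1]].
    destruct (proj1 (constA_sem N A s' e b vs Hvs Hb) (Ha s' Hs') i v Hi) as [m2 [E2 F2]].
    congruence.
Qed.

Definition einh {F Rl} (A : structure F Rl) : assignment (dom A) := fun _ => Some (dom_inh A).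
Lemma einh_total {F Rl} (A : structure F Rl) : total (einh A).
Proof. intros v; discriminate. Qed.

Lemma lit_sem {F Rl} N (A : structure F Rl) X a :
  (forall v, In v (lit_fv a) -> v < N) ->
  (tsat A X (TLit a) <-> exists e, total e /\ Dsem N A X (mkD TrueF (FLit a) []) e).
Proof.
  intros Ha. cbn [tsat]. unfold Dsem; cbn [dg da db].
  assert (K : forall s e, lit_sat A s a <-> tarski A (merge N s e) (FLit a)).
  { intros s e. apply (tarski_coinc A (FLit a)). intros v Hv. unfold merge.
    simpl in Hv. destruct (Nat.ltb_spec v N); auto. specialize (Ha v Hv); lia. }
  split.
  - intros H. exists (einh A). split; [apply einh_total|]. split; [apply TrueF_sat|split; [|intros; contradiction]].
    intros s Hs. apply K; auto.
  - intros [e [_ [_ [H _]]]] s Hs. apply (K s e). auto.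
Qed.

Lemma all1_sem {F Rl} N (A : structure F Rl) X v b :
  v < N -> N <= b ->
  (tsat A X (TAll1 v) <-> exists e, total e /\
     Dsem N A X (mkD TrueF TrueF [(b, FLit (LEq (Var v) (Var b)))]) e).
Proof.
  intros Hv Hb. cbn [tsat]. unfold Dsem; cbn [dg da db].
  assert (K : forall s e m, s v = Some m <-> tarski A (merge N s (upd e b m)) (FLit (LEq (Var v) (Var b)))).
  { intros s e m. cbn [tarski lit_sat eval]. unfold merge, upd.
    destruct (Nat.ltb_spec v N) as [K1|K1]; [|lia]. destruct (Nat.ltb_spec b N) as [K2|K2]; [lia|].
    rewrite Nat.eqb_refl. split; [intros H; exists m; auto| intros [m0 [H1 H2]]; congruence]. }
  split.
  - intros H. exists (einh A). split; [apply einh_total|]. split; [apply TrueF_sat|split; [intros; apply TrueF_sat|]].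
    intros d b0 Hdb m. destruct Hdb as [Hdb|[]]. inversion Hdb; subst.
    destruct (H m) as [s [Hs Hsm]]. exists s. split; auto. apply K; auto.
  - intros [e [_ [_ [_ H]]]] m. destruct (H b _ (or_introl eq_refl) m) as [s [Hs Hsm]].
    exists s; split; auto. apply (K s e m); auto.
Qed.

Lemma brack_sem {F Rl} N (A : structure F Rl) X th :
  fo_fv th = nil ->
  (tsat A X (TBrack th) <-> exists e, total e /\ Dsem N A X (mkD th TrueF []) e).
Proof.
  intros Hth. cbn [tsat]. unfold Dsem, fo_true; cbn [dg da db].
  assert (K : forall e, tarski A empty_asg th <-> tarski A (merge N empty_asg e) th).
  { intros e. apply tarski_coinc. rewrite Hth. intros v []. }
  split.
  - intros H. exists (einh A). split; [apply einh_total|]. split; [apply K; auto|split; [intros; apply TrueF_sat|intros; contradiction]].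
  - intros [e [_ [H _]]]. apply (K e); auto.
Qed.

Fixpoint wd {F Rl} (p : tformula F Rl) : nat :=
  match p with
  | TLit _ | TBrack _ => 0
  | TConst vs => length vs
  | TAll1 _ => 1
  | TAnd p q | TOr p q | TCOr p q => wd p + wd q
  | TEx _ p | TAll _ p => wd p
  end.

Fixpoint allv {F Rl} (p : tformula F Rl) : list nat :=
  match p with
  | TLit a => lit_fv a
  | TBrack _ => nil
  | TConst vs => vs
  | TAll1 v => [v]
  | TAnd p q | TOr p q | TCOr p q => allv p ++ allv q
  | TEx v p | TAll v p => v :: allv p
  end.

Fixpoint tr {F Rl} (b : nat) (p : tformula F Rl) : list (disj F Rl) :=
  match p with
  | TLit a => [mkD TrueF (FLit a) []]
  | TConst vs => [mkD TrueF (constA b vs) []]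
  | TAll1 v => [mkD TrueF TrueF [(b, FLit (LEq (Var v) (Var b)))]]
  | TBrack th => [mkD th TrueF []]
  | TCOr p q => tr b p ++ tr (b + wd p) q
  | TAnd p q => flat_map (fun D1 => map (andD D1) (tr (b + wd p) q)) (tr b p)
  | TOr p q => flat_map (fun D1 => map (orD D1) (tr (b + wd p) q)) (tr b p)
  | TEx v p => map (exD v) (tr b p)
  | TAll v p => map (allD v) (tr b p)
  end.

Lemma WF_P {F Rl} N (P P' Q : nat -> Prop) (D : disj F Rl) :
  WF N P Q D -> (forall v, P v -> P' v) -> WF N P' Q D.
Proof. intros H HP. exact (WF_mono N P P' Q Q D HP (fun v H => H) H). Qed.
Lemma WF_Q {F Rl} N (P Q Q' : nat -> Prop) (D : disj F Rl) :
  WF N P Q D -> (forall v, Q v -> Q' v) -> WF N P Q' D.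
Proof. intros H HQ. exact (WF_mono N P P Q Q' D (fun v H => H) HQ H). Qed.

Lemma tr_wf {F Rl} (p : tformula F Rl) : forall N b,
  (forall v, In v (allv p) -> v < N) -> N <= b -> brackets_ok p ->
  forall D, In D (tr b p) -> WF N (fun v => In v (t_fv p)) (fun v => b <= v < b + wd p) D.
Proof.
  induction p as [a|p IHp q IHq|p IHp q IHq|x p IHp|x p IHp|vs|x|p IHp q IHq|th];
    intros N b Hv Hb Hbr D HD; cbn [tr allv brackets_ok t_fv wd] in HD, Hv, Hbr |- *.
  - destruct HD as [HD|[]]; subst. split; [|split]; cbn [dg da db].
    + unfold OK. rewrite TrueF_fv. intros v [].
    + intros v Hv'. left; auto.
    + intros d b0 [].
  - apply in_flat_map in HD. destruct HD as [D1 [H1 HD]]. apply in_map_iff in HD.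
    destruct HD as [D2 [E H2]]. subst D.
    assert (W1 := IHp N b (fun v H => Hv v (in_or_app _ _ _ (or_introl H))) Hb (proj1 Hbr) D1 H1).
    assert (W2 := IHq N (b + wd p) (fun v H => Hv v (in_or_app _ _ _ (or_intror H))) ltac:(lia) (proj2 Hbr) D2 H2).
    apply (WF_P N _ (fun v => In v (t_fv p ++ t_fv q))) in W1; [|intros; apply in_or_app; auto].
    apply (WF_P N _ (fun v => In v (t_fv p ++ t_fv q))) in W2; [|intros; apply in_or_app; auto].
    eapply WF_Q; [apply WF_and; [exact W1|exact W2| | |]|]; intros; simpl in *; lia.
  - apply in_flat_map in HD. destruct HD as [D1 [H1 HD]]. apply in_map_iff in HD.
    destruct HD as [D2 [E H2]]. subst D.
    assert (W1 := IHp N b (fun v H => Hv v (in_or_app _ _ _ (or_introl H))) Hb (proj1 Hbr) D1 H1).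
    assert (W2 := IHq N (b + wd p) (fun v H => Hv v (in_or_app _ _ _ (or_intror H))) ltac:(lia) (proj2 Hbr) D2 H2).
    apply (WF_P N _ (fun v => In v (t_fv p ++ t_fv q))) in W1; [|intros; apply in_or_app; auto].
    apply (WF_P N _ (fun v => In v (t_fv p ++ t_fv q))) in W2; [|intros; apply in_or_app; auto].
    eapply WF_Q; [apply WF_or; [exact W1|exact W2| | |]|]; intros; simpl in *; lia.
  - apply in_map_iff in HD. destruct HD as [D1 [E H1]]. subst D.
    assert (W1 := IHp N b (fun v H => Hv v (or_intror H)) Hb Hbr D1 H1).
    eapply WF_P; [apply WF_ex; exact W1|]. intros u [Hu Hne]. apply in_in_remove; auto.
  - apply in_map_iff in HD. destruct HD as [D1 [E H1]]. subst D.
    assert (W1 := IHp N b (fun v H => Hv v (or_intror H)) Hb Hbr D1 H1).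
    eapply WF_P; [apply WF_all; exact W1|]. intros u [Hu Hne]. apply in_in_remove; auto.
  - destruct HD as [HD|[]]; subst. split; [|split]; cbn [dg da db].
    + unfold OK. rewrite TrueF_fv. intros v [].
    + intros v Hv'. apply constA_fv in Hv'. destruct Hv'; [left; auto|right; lia].
    + intros d b0 [].
  - destruct HD as [HD|[]]; subst. split; [|split]; cbn [dg da db].
    + unfold OK. rewrite TrueF_fv. intros v [].
    + unfold OK. rewrite TrueF_fv. intros v [].
    + intros d b0 [E|[]]. inversion E; subst. rewrite TrueF_fv. repeat split; try lia; auto.
      intros u Hu. simpl in Hu. destruct Hu as [Hu|[Hu|[]]]; subst; [left|right; lia].
      split; [apply Hv|]; simpl; auto.
  - apply in_app_or in HD. destruct HD as [HD|HD].
    + eapply WF_Q; [eapply WF_P; [apply (IHp N b); [intros v H; apply Hv, in_or_app; auto|lia|tauto|exact HD]|]|].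
      * intros; apply in_or_app; auto.
      * intros; simpl in *; lia.
    + eapply WF_Q; [eapply WF_P; [apply (IHq N (b + wd p)); [intros v H; apply Hv, in_or_app; auto|lia|tauto|exact HD]|]|].
      * intros; apply in_or_app; auto.
      * intros; simpl in *; lia.
  - destruct HD as [HD|[]]; subst. split; [|split]; cbn [dg da db].
    + unfold fo_sentence in Hbr. unfold OK. rewrite Hbr. intros v [].
    + unfold OK. rewrite TrueF_fv. intros v [].
    + intros d b0 [].
Qed.

Lemma Inv_sub {F Rl} (A : structure F Rl) X Y p q :
  Inv A X p -> (forall v, In v (t_fv q) -> In v (t_fv p)) -> (forall s, Y s -> X s) -> Inv A Y q.
Proof. intros H Hf HY s Hs v Hv. apply (H s (HY s Hs)); auto. Qed.

Lemma Inv_upd {F Rl} (A : structure F Rl) X v p (R : assignment (dom A) -> dom A -> Prop) :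
  (forall s, X s -> forall u, In u (remove Nat.eq_dec v (t_fv p)) -> s u <> None) ->
  Inv A (fun s' => exists s m, X s /\ R s m /\ s' = upd s v m) p.
Proof.
  intros H s' [s [m [Hs [_ E]]]] u Hu. subst. unfold upd. destruct (Nat.eqb_spec u v).
  - discriminate.
  - apply (H s Hs). apply in_in_remove; auto.
Qed.

Lemma Inv_updM {F Rl} (A : structure F Rl) X v p :
  (forall s, X s -> forall u, In u (remove Nat.eq_dec v (t_fv p)) -> s u <> None) ->
  Inv A (fun s' => exists s m, X s /\ s' = upd s v m) p.
Proof.
  intros H s' [s [m [Hs E]]] u Hu. subst. unfold upd. destruct (Nat.eqb_spec u v).
  - discriminate.
  - apply (H s Hs). apply in_in_remove; auto.
Qed.

Lemma single_ex {T : Type} (D0 : T) (P : T -> Prop) :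
  (exists D, In D [D0] /\ P D) <-> P D0.
Proof. split; [intros [D [[E|[]] H]]; subst; auto | intros H; exists D0; split; [left|]; auto]. Qed.

Lemma tr_sem {F Rl} (p : tformula F Rl) : forall N b,
  (forall v, In v (allv p) -> v < N) -> N <= b -> brackets_ok p ->
  forall A X, Inv A X p ->
  (tsat A X p <-> exists D, In D (tr b p) /\ exists e, total e /\ Dsem N A X D e).
Proof.
  induction p as [a|p IHp q IHq|p IHp q IHq|x p IHp|x p IHp|vs|x|p IHp q IHq|th];
    intros N b Hv Hb Hbr A X HI; cbn [tr allv brackets_ok wd] in Hv, Hbr |- *.
  - rewrite single_ex. apply lit_sem. auto.
  - cbn [tsat]. assert (HIp : Inv A X p) by (eapply Inv_sub; [exact HI| |auto]; intros v0 H0; simpl; apply in_or_app; left; exact H0).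
    assert (HIq : Inv A X q) by (eapply Inv_sub; [exact HI| |auto]; intros v0 H0; simpl; apply in_or_app; right; exact H0).
    assert (Hvp : forall v, In v (allv p) -> v < N) by (intros v0 H0; apply Hv, in_or_app; tauto).
    assert (Hvq : forall v, In v (allv q) -> v < N) by (intros v0 H0; apply Hv, in_or_app; tauto).
    rewrite (IHp N b), (IHq N (b + wd p)); auto; try lia; try tauto.
    assert (WW : forall D1 D2, In D1 (tr b p) -> In D2 (tr (b + wd p) q) ->
      ((exists e1, total e1 /\ Dsem N A X D1 e1) /\ (exists e2, total e2 /\ Dsem N A X D2 e2) <->
       exists e, total e /\ Dsem N A X (andD D1 D2) e)).
    { intros D1 D2 H1 H2.
      apply (and_step N (fun v => In v (t_fv p ++ t_fv q)) (fun v => b <= v < b + wd p)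
               (fun v => b + wd p <= v < b + wd p + wd q) (b + wd p)).
      - eapply WF_P; [apply (tr_wf p N b); auto; tauto|]. intros; apply in_or_app; tauto.
      - eapply WF_P; [apply (tr_wf q N (b + wd p)); auto; try lia; tauto|]. intros; apply in_or_app; tauto.
      - intros; lia.
      - intros; lia. }
    split.
    + intros [[D1 [H1 E1]] [D2 [H2 E2]]]. exists (andD D1 D2). split.
      * apply in_flat_map; exists D1; split; auto; apply in_map; auto.
      * apply WW; auto.
    + intros [D [HD E]]. apply in_flat_map in HD; destruct HD as [D1 [H1 HD]]; apply in_map_iff in HD;
        destruct HD as [D2 [E' H2]]; subst. apply WW in E; auto. destruct E as [E1 E2].
      split; [exists D1|exists D2]; auto.
  - cbn [tsat]. assert (Hvp : forall v, In v (allv p) -> v < N) by (intros v0 H0; apply Hv, in_or_app; tauto).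
    assert (Hvq : forall v, In v (allv q) -> v < N) by (intros v0 H0; apply Hv, in_or_app; tauto).
    assert (WW : forall D1 D2, In D1 (tr b p) -> In D2 (tr (b + wd p) q) ->
      ((exists Y Z : team (dom A), (forall s, X s <-> Y s \/ Z s) /\
        (exists e1, total e1 /\ Dsem N A Y D1 e1) /\ (exists e2, total e2 /\ Dsem N A Z D2 e2)) <->
       exists e, total e /\ Dsem N A X (orD D1 D2) e)).
    { intros D1 D2 H1 H2.
      apply (or_step N (fun v => In v (t_fv p ++ t_fv q)) (fun v => b <= v < b + wd p)
               (fun v => b + wd p <= v < b + wd p + wd q) (b + wd p)).
      - eapply WF_P; [apply (tr_wf p N b); auto; tauto|]. intros; apply in_or_app; tauto.
      - eapply WF_P; [apply (tr_wf q N (b + wd p)); auto; try lia; tauto|]. intros; apply in_or_app; tauto.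
      - intros; lia.
      - intros; lia. }
    split.
    + intros [Y [Z [HX [Hp Hq]]]].
      assert (HIp : Inv A Y p) by (eapply Inv_sub; [exact HI| |intros s0 Hs0; apply HX; auto]; intros v0 H0; simpl; apply in_or_app; left; exact H0).
      assert (HIq : Inv A Z q) by (eapply Inv_sub; [exact HI| |intros s0 Hs0; apply HX; auto]; intros v0 H0; simpl; apply in_or_app; right; exact H0).
      rewrite (IHp N b) in Hp; auto; try tauto. rewrite (IHq N (b + wd p)) in Hq; auto; try lia; try tauto.
      destruct Hp as [D1 [H1 E1]]. destruct Hq as [D2 [H2 E2]].
      exists (orD D1 D2). split.
      * apply in_flat_map; exists D1; split; auto; apply in_map; auto.
      * apply WW; auto. exists Y, Z; auto.
    + intros [D [HD E]]. apply in_flat_map in HD; destruct HD as [D1 [H1 HD]]; apply in_map_iff in HD;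
        destruct HD as [D2 [E' H2]]; subst. apply WW in E; auto. destruct E as [Y [Z [HX [E1 E2]]]].
      assert (HIp : Inv A Y p) by (eapply Inv_sub; [exact HI| |intros s0 Hs0; apply HX; auto]; intros v0 H0; simpl; apply in_or_app; left; exact H0).
      assert (HIq : Inv A Z q) by (eapply Inv_sub; [exact HI| |intros s0 Hs0; apply HX; auto]; intros v0 H0; simpl; apply in_or_app; right; exact H0).
      exists Y, Z. split; auto. split.
      * apply (IHp N b); auto; try tauto. exists D1; auto.
      * apply (IHq N (b + wd p)); auto; try lia; try tauto. exists D2; auto.
  - cbn [tsat]. assert (Hvp : forall v, In v (allv p) -> v < N) by (intros v0 H0; apply Hv; right; auto).
    assert (Hx : x < N) by (apply Hv; left; auto).
    split.
    + intros [G [HG H]]. rewrite (IHp N b) in H; auto; [|apply Inv_upd; exact HI].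
      destruct H as [D [HD [e [Te E]]]]. exists (exD x D). split; [apply in_map; auto|].
      exists e; split; auto. apply (ex_step N (fun v => In v (t_fv p)) (fun v => b <= v < b + wd p) A X D e x Hx);
        [apply (tr_wf p N b); auto|]. exists G; split; auto.
    + intros [D' [HD [e [Te E]]]]. apply in_map_iff in HD. destruct HD as [D [E' HD]]. subst D'.
      apply (ex_step N (fun v => In v (t_fv p)) (fun v => b <= v < b + wd p) A X D e x Hx) in E;
        [|apply (tr_wf p N b); auto].
      destruct E as [G [HG E]]. exists G; split; auto. apply (IHp N b); auto; [apply Inv_upd; exact HI|].
      exists D; split; auto. exists e; split; auto.
  - cbn [tsat]. assert (Hvp : forall v, In v (allv p) -> v < N) by (intros v0 H0; apply Hv; right; auto).
    assert (Hx : x < N) by (apply Hv; left; auto).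
    rewrite (IHp N b); auto; [|apply Inv_updM; exact HI].
    split.
    + intros [D [HD [e [Te E]]]]. exists (allD x D). split; [apply in_map; auto|].
      exists e; split; auto. apply (all_step N A X D e x Hx). exact E.
    + intros [D' [HD [e [Te E]]]]. apply in_map_iff in HD. destruct HD as [D [E' HD]]. subst D'.
      apply (all_step N A X D e x Hx) in E. exists D; split; auto. exists e; split; auto.
  - rewrite single_ex. apply const_sem; auto.
  - rewrite single_ex. apply all1_sem; auto. apply Hv; left; auto.
  - cbn [tsat]. assert (HIp : Inv A X p) by (eapply Inv_sub; [exact HI| |auto]; intros v0 H0; simpl; apply in_or_app; left; exact H0).
    assert (HIq : Inv A X q) by (eapply Inv_sub; [exact HI| |auto]; intros v0 H0; simpl; apply in_or_app; right; exact H0).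
    rewrite (IHp N b), (IHq N (b + wd p)); auto; try lia; try tauto;
      try (intros v0 H0; apply Hv, in_or_app; tauto).
    split.
    + intros [[D [HD E]]|[D [HD E]]]; exists D; split; auto; apply in_or_app; auto.
    + intros [D [HD E]]. apply in_app_or in HD. destruct HD; [left|right]; exists D; auto.
  - rewrite single_ex. apply brack_sem. exact Hbr.
Qed.

Definition bigAnd {F Rl} (l : list (fo F Rl)) : fo F Rl := fold_right FAnd TrueF l.
Definition bigOr {F Rl} (l : list (fo F Rl)) : fo F Rl := fold_right FOr FalseF l.
Definition exs {F Rl} (l : list nat) (p : fo F Rl) : fo F Rl := fold_right FEx p l.
Definition body {F Rl} (D : disj F Rl) : fo F Rl :=
  FAnd (dg D) (FAnd (da D) (bigAnd (map (fun pr => FAll (fst pr) (snd pr)) (db D)))).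
Definition closeD {F Rl} (D : disj F Rl) : fo F Rl := exs (fo_fv (body D)) (body D).

Lemma fv_exs {F Rl} l (p : fo F Rl) v : In v (fo_fv (exs l p)) -> In v (fo_fv p) /\ ~ In v l.
Proof.
  induction l as [|a l IH]; simpl; [tauto|]. intros H. apply in_remove in H. destruct H as [H1 H2].
  destruct (IH H1). split; auto. intros [E|E]; auto.
Qed.

Lemma closeD_fv {F Rl} (D : disj F Rl) : fo_fv (closeD D) = nil.
Proof.
  unfold closeD. destruct (fo_fv (exs (fo_fv (body D)) (body D))) as [|v l] eqn:E; auto.
  exfalso. assert (H : In v (fo_fv (exs (fo_fv (body D)) (body D)))) by (rewrite E; left; auto).
  apply fv_exs in H. tauto.
Qed.

Lemma bigOr_fv {F Rl} (l : list (fo F Rl)) : (forall p, In p l -> fo_fv p = nil) -> fo_fv (bigOr l) = nil.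
Proof.
  induction l as [|p l IH]; intros H; [reflexivity|]. cbn [bigOr fold_right fo_fv].
  change (fo_fv p ++ fo_fv (bigOr l) = nil). rewrite H by (left; auto). rewrite IH; auto.
  intros; apply H; right; auto.
Qed.

Lemma bigOr_sem {F Rl} (A : structure F Rl) s l :
  tarski A s (bigOr l) <-> exists p, In p l /\ tarski A s p.
Proof.
  induction l as [|p l IH].
  - split; [intros H; exfalso; apply (FalseF_sat A s); exact H|intros [p [[] _]]].
  - change (tarski A s p \/ tarski A s (bigOr l) <-> exists q, In q (p :: l) /\ tarski A s q).
    rewrite IH. split.
    + intros [H|[q [H1 H2]]]; [exists p; split; [left|]; auto|exists q; split; [right|]; auto].
    + intros [q [[E|H1] H2]]; [subst; left; auto|right; exists q; auto].
Qed.

Lemma bigAnd_sem {F Rl} (A : structure F Rl) s l :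
  tarski A s (bigAnd l) <-> forall p, In p l -> tarski A s p.
Proof.
  induction l as [|p l IH].
  - split; [intros _ p []|intros _; apply TrueF_sat].
  - change (tarski A s p /\ tarski A s (bigAnd l) <-> forall q, In q (p :: l) -> tarski A s q).
    rewrite IH. split.
    + intros [H1 H2] q [E|Hq]; subst; auto.
    + intros H; split; [apply H; left|intros; apply H; right]; auto.
Qed.

Lemma bigAnd_fv {F Rl} (l : list (fo F Rl)) v : In v (fo_fv (bigAnd l)) -> exists p, In p l /\ In v (fo_fv p).
Proof.
  induction l as [|p l IH].
  - change (In v (fo_fv (@TrueF F Rl)) -> exists p : fo F Rl, In p [] /\ In v (fo_fv p)). rewrite TrueF_fv. intros [].
  - change (In v (fo_fv p ++ fo_fv (bigAnd l)) -> exists q, In q (p :: l) /\ In v (fo_fv q)).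
    intros H. apply in_app_or in H. destruct H as [H|H]; [exists p; split; [left|]; auto|].
    destruct (IH H) as [q [H1 H2]]. exists q; split; [right|]; auto.
Qed.

Lemma exs_elim {F Rl} (A : structure F Rl) l p : forall s, tarski A s (exs l p) ->
  exists s', (forall v, ~ In v l -> s' v = s v) /\ (forall v, In v l -> s' v <> None) /\ tarski A s' p.
Proof.
  induction l as [|a l IH]; intros s H.
  - exists s. split; [auto|split; [intros v []|exact H]].
  - destruct H as [m Hm]. destruct (IH _ Hm) as [s' [H1 [H2 H3]]]. exists s'. split; [|split; auto].
    + intros v Hv. rewrite H1 by (intros Hl; apply Hv; right; exact Hl). unfold upd.
      destruct (Nat.eqb_spec v a); auto. exfalso; apply Hv; left; auto.
    + intros v [E|Hv]; auto. subst v. destruct (in_dec Nat.eq_dec a l); auto.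
      rewrite H1 by auto. unfold upd. rewrite Nat.eqb_refl. discriminate.
Qed.

Lemma exs_intro {F Rl} (A : structure F Rl) l p : forall s s',
  (forall v, In v l -> s' v <> None) -> (forall v, In v (fo_fv p) -> ~ In v l -> s' v = s v) ->
  tarski A s' p -> tarski A s (exs l p).
Proof.
  induction l as [|a l IH]; intros s s' H1 H2 H3.
  - simpl. refine (proj1 (tarski_coinc A p s' s _) H3). intros v Hv. apply H2; auto.
  - destruct (s' a) as [m|] eqn:E; [|exfalso; apply (H1 a); [left|]; auto].
    exists m. apply (IH _ s'); auto.
    + intros v Hv; apply H1; right; auto.
    + intros v Hv Hn. unfold upd. destruct (Nat.eqb_spec v a); [subst; auto|].
      apply H2; auto. intros [E'|E']; auto.
Qed.

Lemma body_sem {F Rl} N (A : structure F Rl) (D : disj F Rl) e :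
  (forall d b, In (d, b) (db D) -> N <= d) ->
  (tarski A (merge N empty_asg e) (body D) <-> Dsem N A (fun s => s = empty_asg) D e).
Proof.
  intros Hd. unfold body, Dsem. cbn [tarski]. rewrite bigAnd_sem. split.
  - intros [H1 [H2 H3]]. split; auto. split.
    + intros s E; subst; auto.
    + intros d b Hdb m. exists empty_asg. split; auto. rewrite <- merge_upd_ge by (eapply Hd; eauto).
      apply (H3 (FAll d b)). apply in_map_iff. exists (d, b); auto.
  - intros [H1 [H2 H3]]. split; auto. split; auto.
    intros q Hq. apply in_map_iff in Hq. destruct Hq as [[d b] [E Hdb]]. subst q. simpl.
    intros m. destruct (H3 d b Hdb m) as [s [E Hs]]. subst. rewrite merge_upd_ge by (eapply Hd; eauto). auto.
Qed.

Lemma close_sem {F Rl} N (Q : nat -> Prop) (A : structure F Rl) (D : disj F Rl) :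
  WF N (fun v => In v nil) Q D -> (forall v, Q v -> N <= v) ->
  (tarski A empty_asg (closeD D) <-> exists e, total e /\ Dsem N A (fun s => s = empty_asg) D e).
Proof.
  intros [G [Aa B]] HQ.
  assert (Hd : forall d b, In (d, b) (db D) -> N <= d) by (intros d b H; apply HQ; apply (B d b H)).
  assert (Hfv : forall v, In v (fo_fv (body D)) -> N <= v).
  { intros v Hv. unfold body in Hv. cbn [fo_fv] in Hv. apply in_app_or in Hv. destruct Hv as [Hv|Hv].
    - destruct (G v Hv) as [[]|]; auto; contradiction.
    - apply in_app_or in Hv. destruct Hv as [Hv|Hv].
      + destruct (Aa v Hv) as [[_ []]|]; auto.
      + apply bigAnd_fv in Hv. destruct Hv as [q [Hq Hv]]. apply in_map_iff in Hq.
        destruct Hq as [[d b] [E Hdb]]. subst q. simpl in Hv. apply in_remove in Hv.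
        destruct (B d b Hdb) as [_ [_ [_ K]]]. destruct (K v (proj1 Hv)) as [[_ []]|]; auto. }
  unfold closeD. split.
  - intros H. apply exs_elim in H. destruct H as [s' [H1 [H2 H3]]].
    exists (fun v => Some (match s' v with Some x => x | None => dom_inh A end)).
    split; [intros v; discriminate|]. apply body_sem; auto.
    refine (proj1 (tarski_coinc A _ s' _ _) H3). intros v Hv. unfold merge.
    destruct (Nat.ltb_spec v N); [specialize (Hfv v Hv); lia|].
    specialize (H2 v Hv). destruct (s' v); auto. contradiction.
  - intros [e [Te HD]]. apply (body_sem N A D e Hd) in HD.
    apply (exs_intro A _ _ _ (merge N empty_asg e)); auto.
    + intros v Hv. unfold merge. destruct (Nat.ltb_spec v N); [specialize (Hfv v Hv); lia|]. apply Te.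
    + intros v Hv Hn. contradiction.
Qed.

Theorem mainTheorem9 (F Rl : Type) (phi : tformula F Rl) :
  t_sentence phi ->
  exists phi' : fo F Rl, fo_sentence phi' /\
    forall A : structure F Rl, t_true A phi <-> fo_true A phi'.
Proof.
  intros [Hfv Hbr]. set (N := S (list_max (allv phi))).
  assert (Hv : forall v, In v (allv phi) -> v < N).
  { intros v Hv. assert (K : list_max (allv phi) <= list_max (allv phi)) by lia.
    apply list_max_le in K. rewrite Forall_forall in K. specialize (K v Hv). unfold N; lia. }
  exists (bigOr (map closeD (tr N phi))). split.
  - unfold fo_sentence. apply bigOr_fv. intros p Hp. apply in_map_iff in Hp.
    destruct Hp as [D [E _]]. subst. apply closeD_fv.
  - intros A. unfold t_true, fo_true. rewrite (tr_sem phi N N); auto.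
    2:{ intros s _ v Hv'. rewrite Hfv in Hv'. contradiction. }
    rewrite bigOr_sem. split.
    + intros [D [HD E]]. exists (closeD D). split; [apply in_map; auto|].
      apply (close_sem N (fun v => N <= v < N + wd phi)); auto; [|intros; lia].
      rewrite <- Hfv. apply tr_wf; auto.
    + intros [p [Hp E]]. apply in_map_iff in Hp. destruct Hp as [D [E' HD]]. subst p.
      exists D; split; auto.
      apply (close_sem N (fun v => N <= v < N + wd phi)) in E; auto; [|intros; lia].
      rewrite <- Hfv. apply tr_wf; auto.
Qed.
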